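(* Let $q$ be a prime power, $L$ an integer with $1\le L<q$, and $r\in[0,\frac{L}{L+1})$ with $rn\in\mathbb{N}$. If $C\subseteq\mathbb{F}_q^n$ is a linear $(r,L)$ list-decodable code, then $d(C)>rn+\lfloor\frac{rn}{L}\rfloor$.
   Context: A linear code is a subspace of $\mathbb{F}_q^n$; $d(C)$ is its minimum Hamming distance between distinct codewords. $C$ is $(r,L)$ list-decodable if every Hamming ball of radius $rn$ in $\mathbb{F}_q^n$ contains at most $L$ codewords. *)

(* Defs.v *)
From HB Require Import structures.
From mathcomp Require Import all_boot all_order all_algebra all_field.
Set Implicit Arguments. Unset Strict Implicit. Unset Printing Implicit Defensive.
Import Order.TTheory GRing.Theory Num.Theory.

Definition hamming (F : eqType) (n : nat) (x y : 'rV[F]_n) : nat :=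
  #|[set i : 'I_n | x ord0 i != y ord0 i]|.

Definition list_decodable (R : realFieldType) (F : finFieldType) (n : nat)
    (C : {vspace 'rV[F]_n}) (r : R) (L : nat) : Prop :=
  forall y : 'rV[F]_n,
    #|[set c : 'rV[F]_n | (c \in C) && ((hamming y c)%:R <= r * n%:R)%R]| <= L.

(* d(C) > k, where d(C) is the minimum Hamming distance between distinct
   codewords (d(C) = +oo by convention if C has fewer than two codewords). *)
Definition min_dist_gt (F : finFieldType) (n : nat) (C : {vspace 'rV[F]_n})
    (k : nat) : Prop :=
  forall x y : 'rV[F]_n, x \in C -> y \in C -> x != y -> k < hamming x y.

(* Main.v *)
Require Import Defs.
From HB Require Import structures.
From mathcomp Require Import all_boot all_order all_algebra all_field.
From mathcomp Require Import zify.
Import Order.TTheory GRing.Theory Num.Theory.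

Lemma subset_of_card (T : finType) (S : {set T}) m : m <= #|S| ->
  exists A : {set T}, A \subset S /\ #|A| = m.
Proof.
move=> hm; exists [set x in take m (enum S)]; split.
  by apply/subsetP=> x; rewrite inE => /mem_take; rewrite mem_enum.
rewrite cardsE; move/card_uniqP: (take_uniq m (enum_uniq (mem S))) ->.
by rewrite size_take -cardE; case: ltngtP hm => // ->.
Qed.

Lemma parts (n K m : nat) (S : {set 'I_n}) : K * m <= #|S| ->
  exists f : 'I_n -> nat, forall i, i < K -> m <= #|[set k in S | f k == i]|.
Proof.
elim: K S => [|K IH] S hS; first by exists (fun _ => 0).
have [A [AS cA]] : exists A : {set 'I_n}, A \subset S /\ #|A| = m.
  by apply: subset_of_card; rewrite mulSn in hS; lia.
have hD : K * m <= #|S :\: A|.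
  by rewrite cardsD (setIidPr AS) cA; rewrite mulSn in hS; lia.
have [f' Hf'] := IH _ hD.
exists (fun k => if k \in A then K else f' k) => i hi.
have [iK|] := ltnP i K.
  apply: leq_trans (Hf' _ iK) _; apply: subset_leq_card; apply/subsetP=> x.
  rewrite !inE => /andP[/andP[xA xS] /eqP <-].
  by rewrite xS (negbTE xA) eqxx.
move=> Ki; have iK : i = K by apply/eqP; rewrite eqn_leq Ki -ltnS hi.
rewrite -cA iK; apply: subset_leq_card; apply/subsetP=> x xA.
by rewrite inE xA eqxx (subsetP AS).
Qed.

Theorem proposition6p4 (R : realFieldType) (F : finFieldType) (n L : nat)
    (r : R) (t : nat) (C : {vspace 'rV[F]_n}) :
  1 <= L -> L < #|F| ->
  (0 <= r)%R -> (r < L%:R / (L.+1)%:R)%R ->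
  (r * n%:R = t%:R)%R ->
  list_decodable C r L ->
  min_dist_gt C (t + t %/ L).
Proof.
move=> L1 LF r0 _ hrt hLD x y xC yC xy.
case: (ltnP (t + t %/ L) (hamming x y)) => // hw; exfalso.
pose c := (y - x)%R.
have cC : c \in C := memvB yC xC.
pose S := [set k : 'I_n | c ord0 k != 0%R].
have hS : hamming x y = #|S|.
  rewrite /hamming; apply: eq_card => k; rewrite !inE /c !mxE subr_eq0 eq_sym.
  by [].
have c0 : c != 0%R by rewrite /c subr_eq0 eq_sym.
have hpart : L.+1 * (#|S| - t) <= #|S|.
  rewrite hS in hw.
  have := leq_trunc_div t L.
  have h1 : #|S| - t <= t %/ L by rewrite leq_subLR.
  have h2 := leq_mul h1 (leqnn L).
  rewrite mulSnr. lia.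
have [f Hf] := @parts _ _ _ _ hpart.
pose a i := nth 0%R (enum F) i.
have ainj : forall i j, i < L.+1 -> j < L.+1 -> a i = a j -> i = j.
  move=> i j hi hj /eqP; rewrite nth_uniq ?enum_uniq //; first by move/eqP.
    by rewrite -cardE; apply: leq_trans LF.
  by rewrite -cardE; apply: leq_trans LF.
pose z : 'rV[F]_n := (\row_(k < n) (a (f k) * c ord0 k))%R.
have := hLD z.
set B := [set _ | _].
have inj : injective (fun i : 'I_L.+1 => a i *: c)%R.
  move=> i j /= h; apply: val_inj; apply: ainj; rewrite ?ltn_ord //.
  have : ((a i - a j) *: c == 0)%R by rewrite scalerBl h subrr.
  by rewrite scaler_eq0 (negbTE c0) orbF subr_eq0 => /eqP.
have sub : [set (a (val i) *: c)%R | i : 'I_L.+1] \subset B.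
  apply/subsetP => _ /imsetP[i _ ->]; rewrite inE memvZ //= hrt ler_nat.
  apply: (@leq_trans #|S :\: [set k in S | f k == i]|).
    apply: subset_leq_card; apply/subsetP => k; rewrite !inE /z mxE [(_ *: c)%R _ _]mxE.
    case: (f k =P i) => [->|_]; first by rewrite eqxx.
    case: (c ord0 k =P 0%R) => [->|]; first by rewrite !mulr0 eqxx.
    by [].
  rewrite cardsD; have := Hf i (ltn_ord i).
  have : #|S :&: [set k in S | f k == i]| = #|[set k in S | f k == i]|.
    rewrite (setIidPr (_ : [set k in S | f k == i] \subset S)) //.
    by apply/subsetP => k; rewrite inE => /andP[].
  by move=> -> h; rewrite leq_subLR addnC -leq_subLR.
have := subset_leq_card sub; rewrite card_imset // card_ord; lia.
Qed.
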